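(* For all integers $n\ge 1$ and $k\ge 0$, the number of ordered (plane) trees with $n$ edges containing exactly $k$ nodes that are adjacent to a leaf equals \[\frac{1}{n+1}\binom{n+1}{2k+1}\binom{n+k}{k}.\] Consequently $C_n=\frac{1}{n+1}\sum_{k}\binom{n+1}{2k+1}\binom{n+k}{k}$.
   Context: In an ordered tree the vertices are partitioned into three classes: the root, the leaves (non-root vertices with no children), and the nodes (vertices that are neither the root nor a leaf). A node is adjacent to a leaf if at least one of its children is a leaf. $C_n$ denotes the $n$th Catalan number. *)

(* Defs.v *)
From Stdlib Require Import List.
From mathcomp Require Import all_boot.
Set Implicit Arguments. Unset Strict Implicit. Unset Printing Implicit Defensive.

Inductive otree : Type := ONode : list otree -> otree.

Definition children (t : otree) : seq otree := let: ONode ts := t in ts.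

Definition no_children (t : otree) : bool := nilp (children t).

Fixpoint edges (t : otree) : nat :=
  let: ONode ts := t in
  (fix go (l : seq otree) : nat :=
     match l with [::] => 0 | c :: l' => (edges c).+1 + go l' end) ts.

Fixpoint adj_count (t : otree) : nat :=
  let: ONode ts := t in
  has no_children ts +
  (fix go (l : seq otree) : nat :=
     match l with [::] => 0 | c :: l' => adj_count c + go l' end) ts.

(* number of NODES (non-root, non-leaf vertices) adjacent to a leaf:
   count over the subtrees of the root's children, so the root is excluded;
   a vertex with a leaf child is automatically not a leaf. *)
Definition nodes_adj_leaf (t : otree) : nat := sumn (map adj_count (children t)).

Definition catalan (n : nat) : nat := 'C(n.*2, n) %/ n.+1.

(* Main.v *)
Require Import Defs.
From Stdlib Require Import List Permutation.
From mathcomp Require Import all_boot.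
From Stdlib Require Import Lia.
From mathcomp Require Import zify.
Set Implicit Arguments. Unset Strict Implicit. Unset Printing Implicit Defensive.

Lemma edgesE ts : edges (ONode ts) = sumn [seq (edges c).+1 | c <- ts].
Proof. by elim: ts => //= c ts ->. Qed.

Lemma adjE ts : adj_count (ONode ts) = has no_children ts + sumn [seq adj_count c | c <- ts].
Proof. rewrite /=; congr (_ + _); by elim: ts => //= c ts ->. Qed.

Arguments edges : simpl never.
Arguments adj_count : simpl never.

Definition leaf := ONode [::].
Definition nodes t := nodes_adj_leaf t.

Lemma nodesE ts : nodes (ONode ts) = sumn [seq adj_count c | c <- ts].
Proof. by []. Qed.

Fixpoint build (ws : seq otree) (V : otree) : otree :=
  match ws with
  | [::] => ONode (leaf :: children V)
  | w :: ws' => ONode (build ws' V :: children w)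
  end.

Fixpoint unbuild (c : otree) : seq otree * otree :=
  match c with
  | ONode (d :: ds) =>
      if no_children d then ([::], ONode ds)
      else let: (ws, V) := unbuild d in (ONode ds :: ws, V)
  | ONode [::] => ([::], leaf)
  end.

Lemma eta t : ONode (children t) = t. Proof. by case: t. Qed.

Lemma build_nonleaf ws V : no_children (build ws V) = false.
Proof. by case: ws. Qed.

Lemma unbuildK ws V : unbuild (build ws V) = (ws, V).
Proof.
elim: ws => [|w ws IH] /=; first by rewrite eta.
by rewrite build_nonleaf IH eta.
Qed.

Lemma buildK : forall c, no_children c = false -> build (unbuild c).1 (unbuild c).2 = c.
Proof.
fix IH 1. case=> [[|d ds]] //= _.
case Hd: (no_children d).
  by case: d Hd => [[|]].
have := IH d Hd. case: (unbuild d) => ws V /= ->. by [].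
Qed.

Lemma edges_leaf : edges leaf = 0. Proof. by rewrite /leaf edgesE. Qed.
Lemma adj_leaf : adj_count leaf = 0. Proof. by rewrite /leaf adjE. Qed.

Lemma edgesC V : edges V = sumn [seq (edges c).+1 | c <- children V].
Proof. by case: V => ts; rewrite edgesE. Qed.
Lemma nodesC V : nodes V = sumn [seq adj_count c | c <- children V].
Proof. by case: V. Qed.

Lemma adjC w : adj_count w = has no_children (children w) + nodes w.
Proof. by case: w => ts; rewrite adjE. Qed.

Lemma build_edges ws V : edges (build ws V) = (edges V + edges (ONode ws)).+1.
Proof.
elim: ws => [|w ws IH].
  rewrite [build _ _]/= edgesE (edgesC V) [edges (ONode [::])]edgesE /=. rewrite edges_leaf. lia.
rewrite [build _ _]/= edgesE [map _ _]/= IH.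
rewrite [sumn (_ :: _)]/= -edgesC [edges (ONode (w :: ws))]edgesE /= -edgesE. lia.
Qed.

Lemma build_adj ws V : adj_count (build ws V) = (nodes V + nodes (ONode ws)).+1.
Proof.
elim: ws => [|w ws IH].
  rewrite [build _ _]/= adjE [map _ _]/= (nodesC V) adj_leaf nodesE /=. lia.
have e1 : nodes (ONode (w :: ws)) = adj_count w + nodes (ONode ws) by [].
have e2 : sumn [seq adj_count c | c <- build ws V :: children w] = adj_count (build ws V) + nodes w by rewrite /= (nodesC w).
have e3 : has no_children (build ws V :: children w) = has no_children (children w) by rewrite /= build_nonleaf.
rewrite [build _ _]/= adjE e1 e2 e3 IH adjC. lia.
Qed.

Lemma edges_addleaf t : edges (ONode (leaf :: children t)) = (edges t).+1.
Proof. by rewrite edgesE /= edges_leaf -edgesC. Qed.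
Lemma nodes_addleaf t : nodes (ONode (leaf :: children t)) = nodes t.
Proof. by rewrite nodesE /= adj_leaf -nodesC. Qed.
Lemma edges_glue R V W : edges (ONode (build (children W) V :: children R)) = (edges R + edges V + edges W).+2.
Proof. rewrite edgesE /= build_edges -!edgesC eta. lia. Qed.
Lemma nodes_glue R V W : nodes (ONode (build (children W) V :: children R)) = (nodes R + nodes V + nodes W).+1.
Proof. rewrite nodesE /= build_adj -!nodesC eta. lia. Qed.

Definition fedges (f : seq otree) := sumn (map edges f).
Definition fstat (f : seq otree) := sumn (map nodes f).
Definition addleaf (f : seq otree) :=
  match f with t :: f' => ONode (leaf :: children t) :: f' | [::] => [::] end.
Definition glue (f : seq otree) :=
  match f with R :: V :: W :: f' => ONode (build (children W) V :: children R) :: f' | _ => [::] end.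

Fixpoint enumF (fuel r n : nat) : list (seq otree) :=
  match fuel with
  | 0 => nil
  | fuel'.+1 =>
    match r with
    | 0 => if n == 0 then [:: [::]] else nil
    | r'.+1 => List.app (List.map (cons leaf) (enumF fuel' r' n))
        match n with
        | 0 => nil
        | n'.+1 => List.app (List.map addleaf (enumF fuel' r n'))
            match n' with
            | 0 => nil
            | n''.+1 => List.map glue (enumF fuel' r'.+3 n'')
            end
        end
    end
  end.

Lemma enumF_mem fuel r n f : In f (enumF fuel r n) -> [/\ size f = r, fedges f = n & fstat f <= n].
Proof.
elim: fuel r n f => [|fuel IH] r n f //=.
case: r => [|r].
  by case: n => //= -[] // <-.
rewrite in_app_iff in_map_iff => -[[g [<- /IH [<- <- le]]] /=|].
  by rewrite /fedges /fstat /= edges_leaf nodesE.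
case: n => [|n] //=.
rewrite in_app_iff in_map_iff => -[[g [<- /IH [sg eg lg]]] /=|].
  case: g sg eg lg => [|t g] //= [<-] <- lg.
  rewrite /fedges /fstat /= edges_addleaf nodes_addleaf. split => //.
  rewrite /fstat /fedges /= in lg. lia.
case: n => [|n] //=.
rewrite in_map_iff => -[g [<- /IH [sg eg lg]]].
case: g sg eg lg => [|R [|V [|W g]]] //= [<-] <- lg.
rewrite /fedges /fstat /= edges_glue nodes_glue. split => //; first by lia.
rewrite /fstat /fedges /= in lg. lia.
Qed.

Lemma enumF_complete fuel r n f : 2 * n + r < fuel -> size f = r -> fedges f = n -> In f (enumF fuel r n).
Proof.
elim: fuel r n f => [|fuel IH] r n f //= hfu.
case: r hfu => [|r] hfu.
  case: f => //= _ <-. by left.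
case: f => [|t g] //= [sg].
rewrite in_app_iff in_map_iff /fedges /= -/(fedges g).
case: t => -[|d ts].
  rewrite edges_leaf add0n => eg. left. exists g. split => //. apply: IH => //. lia.
rewrite edgesE /= -edgesE => eg. right.
case: n eg hfu => [|n] eg hfu; first by lia.
rewrite in_app_iff in_map_iff.
case hd: (no_children d).
  left. exists (ONode ts :: g). split.
    by clear -hd; case: d hd => -[].
  apply: IH; [lia | by rewrite /= sg | idtac].
  have ed : edges d = 0 by clear -hd; case: d hd => -[] // _; rewrite edgesE.
  rewrite /fedges /= -/(fedges g). lia.
right.
have hb := buildK hd.
case: n eg hfu => [|n] eg hfu.
  move: eg. rewrite -hb build_edges. lia.
rewrite in_map_iff.
exists (ONode ts :: (unbuild d).2 :: ONode (unbuild d).1 :: g). split.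
  by rewrite /= hb.
apply: IH; [lia | by rewrite /= sg | ].
rewrite /fedges /= -/(fedges g). move: eg. rewrite -{1}hb build_edges. lia.
Qed.

Definition cls (f : seq otree) : nat :=
  match f with
  | (ONode [::]) :: _ => 0
  | (ONode (d :: _)) :: _ => if no_children d then 1 else 2
  | [::] => 3
  end.

Lemma enumF_nodup fuel r n : NoDup (enumF fuel r n).
Proof.
elim: fuel r n => [|fuel IH] r n /=; first by constructor.
case: r => [|r].
  case: (n == 0); repeat constructor. by [].
have hcls1 : forall f, In f (List.map (cons leaf) (enumF fuel r n)) -> cls f = 0.
  by move=> f /in_map_iff [g [<- _]].
apply: NoDup_app.
- apply: NoDup_map_NoDup_ForallPairs => //.
  by move=> x y _ _ [].
- clear hcls1. case: n => [|n]; first by constructor.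
  have hcls2 : forall f, In f (List.map addleaf (enumF fuel r.+1 n)) -> cls f = 1.
    move=> f /in_map_iff [g [<- /enumF_mem [sg _ _]]].
    by case: g sg => [|t g].
  apply: NoDup_app.
  + apply: NoDup_map_NoDup_ForallPairs => //.
    move=> x y /enumF_mem [sx _ _] /enumF_mem [sy _ _].
    case: x sx => [|t1 x] // _; case: y sy => [|t2 y] // _ /= [e1 ->].
    by rewrite -(eta t1) -(eta t2) e1.
  + case: n hcls2 => [|n] hcls2; first by constructor.
    apply: NoDup_map_NoDup_ForallPairs => //.
    move=> x y /enumF_mem [sx _ _] /enumF_mem [sy _ _].
    case: x sx => [|R1 [|V1 [|W1 x]]] // _; case: y sy => [|R2 [|V2 [|W2 y]]] // _ /= [e1 e2 ->].
    have := unbuildK (children W1) V1. rewrite e1 unbuildK => -[e3 ->].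
    by rewrite -(eta R1) -(eta R2) -(eta W1) -(eta W2) e2 e3.
  + move=> a /hcls2 c1. clear hcls2. case: n => [|n] //.
    move=> /in_map_iff [g [ha /enumF_mem [sg _ _]]]. rewrite -ha in c1. clear ha.
    move: c1. case: g sg => [|R [|V [|W g]]] //= _.
    by rewrite build_nonleaf.
- move=> a /hcls1 c1. clear hcls1. case: n => [|n] //.
  rewrite in_app_iff. case.
    move=> /in_map_iff [g [ha /enumF_mem [sg _ _]]].
    move: c1. rewrite -ha. clear ha. by case: g sg => [|t g].
  case: n => [|n] //.
  move=> /in_map_iff [g [ha /enumF_mem [sg _ _]]].
  move: c1. rewrite -ha. clear ha. case: g sg => [|R [|V [|W g]]] //= _.
  by rewrite build_nonleaf.
Qed.

Lemma count_app (A : Type) (p : pred A) l1 l2 : count p (List.app l1 l2) = count p l1 + count p l2.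
Proof. elim: l1 => //= x l ->. by rewrite addnA. Qed.
Lemma count_lmap (A B : Type) (p : pred B) (f : A -> B) l : count p (List.map f l) = count (fun x => p (f x)) l.
Proof. by elim: l => //= x l ->. Qed.
Lemma count_In_ext (A : Type) (p q : pred A) l : (forall x, In x l -> p x = q x) -> count p l = count q l.
Proof.
elim: l => //= x l IH h. rewrite h; last by left.
by rewrite IH // => y hy; apply: h; right.
Qed.
Lemma count_perm (A : Type) (p : pred A) l1 l2 : Permutation l1 l2 -> count p l1 = count p l2.
Proof.
elim => //= [x l l' _ -> | x y l | l l' l'' _ -> _ ->] //.
by rewrite !addnA [p y + _]addnC.
Qed.
Lemma count_nodup (A : Type) (p : pred A) l1 l2 : NoDup l1 -> NoDup l2 ->
  (forall x, In x l1 <-> In x l2) -> count p l1 = count p l2.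
Proof. move=> h1 h2 h. apply: count_perm. exact: NoDup_Permutation. Qed.

Lemma enumF_count (p : pred (seq otree)) fuel1 fuel2 r n : 2 * n + r < fuel1 -> 2 * n + r < fuel2 ->
  count p (enumF fuel1 r n) = count p (enumF fuel2 r n).
Proof.
move=> h1 h2. apply: count_nodup; try exact: enumF_nodup.
move=> f; split => /enumF_mem [s e _]; exact: enumF_complete.
Qed.

Definition fuelc r n := (2 * n + r).+1.

Lemma enumF_S fuel r n : enumF fuel.+1 r.+1 n =
  List.app (List.map (cons leaf) (enumF fuel r n))
        match n with
        | 0 => nil
        | n'.+1 => List.app (List.map addleaf (enumF fuel r.+1 n'))
            match n' with
            | 0 => nil
            | n''.+1 => List.map glue (enumF fuel r.+3 n'')
            end
        end.
Proof. by []. Qed.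

Lemma rec_gen (p : pred (seq otree)) r n :
  count p (enumF (fuelc r.+1 n) r.+1 n) =
  count (fun g => p (leaf :: g)) (enumF (fuelc r n) r n) +
  (if n is n'.+1 then count (fun g => p (addleaf g)) (enumF (fuelc r.+1 n') r.+1 n') +
     (if n' is n''.+1 then count (fun g => p (glue g)) (enumF (fuelc r.+3 n'') r.+3 n'') else 0)
   else 0).
Proof.
rewrite /fuelc addnS enumF_S count_app count_lmap.
case: n => [|n]; first by rewrite /= !addn0.
rewrite count_app count_lmap. congr (_ + (_ + _)).
  apply: enumF_count; lia.
case: n => [|n] //.
rewrite count_lmap. apply: enumF_count; lia.
Qed.

Definition c r n k := count (fun f => fstat f == k) (enumF (fuelc r n) r n).
Definition d r n := count xpredT (enumF (fuelc r n) r n).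

Lemma fstat_leaf g : fstat (leaf :: g) = fstat g.
Proof. by rewrite /fstat /= nodesE. Qed.
Lemma fstat_addleaf g : fstat (addleaf g) = fstat g.
Proof. case: g => [|t g] //. Qed.
Lemma fstat_glue g : 3 <= size g -> fstat (glue g) = (fstat g).+1.
Proof. case: g => [|R [|V [|W g]]] // _. rewrite /fstat /= nodes_glue. lia. Qed.

Lemma c_rec r n k : c r.+1 n k = c r n k +
  (if n is n'.+1 then c r.+1 n' k + (if n' is n''.+1 then (if k is k'.+1 then c r.+3 n'' k' else 0) else 0) else 0).
Proof.
rewrite /c rec_gen. congr (_ + _).
case: n => [|n] //. congr (_ + _).
  apply: eq_count => g. by rewrite fstat_addleaf.
case: n => [|n] //.
rewrite (@count_In_ext _ _ (fun g => (fstat g).+1 == k)); last first.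
  by move=> g /enumF_mem [sg _ _] /=; rewrite fstat_glue // sg.
case: k => [|k] //.
by rewrite (@eq_count _ _ pred0) ?count_pred0.
Qed.

Lemma d_rec r n : d r.+1 n = d r n +
  (if n is n'.+1 then d r.+1 n' + (if n' is n''.+1 then d r.+3 n'' else 0) else 0).
Proof.
rewrite /d rec_gen. by case: n => [|[|n]].
Qed.

Lemma c0 n k : c 0 n k = ((n == 0) && (k == 0)).
Proof. rewrite /c /fuelc /=. case: n => //=. by rewrite eq_sym addn0. Qed.
Lemma d0 n : d 0 n = (n == 0).
Proof. rewrite /d /fuelc /=. by case: n. Qed.

Lemma c_n0 r k : c r 0 k = (k == 0).
Proof. elim: r => [|r IH]; first by rewrite c0. by rewrite c_rec IH addn0. Qed.
Lemma d_n0 r : d r 0 = 1.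
Proof. elim: r => [|r IH]; first by rewrite d0. by rewrite d_rec IH. Qed.

Lemma alg_c (m r k c1 c2 X a b P Q t : nat) : 0 < m ->
  m * c1 = r * a * P -> m * c2 = r.+1 * b * P -> m.+1 * X = r.+3 * (a+b) * Q ->
  (a + b) * (k * P) = (a + b) * (m * Q) -> P * ((r + k*2).+1 * b) = P * (t * a) ->
  P * (m * a) = P * ((r + k*2) * a + t * a) ->
  m.+1 * (c1 + (c2 + X)) = r.+1 * (a + b) * (P + Q).
Proof.
move=> mpos h1 h2 h3 G1 G2 G3.
apply/eqP. rewrite -(eqn_pmul2l mpos). apply/eqP.
have -> : m * (m.+1 * (c1 + (c2 + X))) = m.+1 * (m * c1) + m.+1 * (m * c2) + m * (m.+1 * X) by lia.
rewrite h1 h2 h3. lia.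
Qed.
Lemma alg_d (n r d1 d2 Y u v w : nat) :
  (n.+1 + r) * d1 = r * (w + v) -> (n.+1 + r) * d2 = r.+1 * v -> (n.+1 + r).+1 * Y = r.+3 * u ->
  n * v = (n.+1 + r) * u -> n.+1 * w = (n + r) * v ->
  (n.+1 + r).+1 * (d1 + (d2 + Y)) = r.+1 * ((w + v) + (v + u)).
Proof.
move=> h1 h2 h3 G1 G2.
apply/eqP. rewrite -(@eqn_pmul2l (n.+1 + r)) //. apply/eqP.
have -> : (n.+1 + r) * ((n.+1 + r).+1 * (d1 + (d2 + Y))) = (n.+1 + r).+1 * ((n.+1 + r) * d1) + (n.+1 + r).+1 * ((n.+1 + r) * d2) + (n.+1 + r) * ((n.+1 + r).+1 * Y) by lia.
rewrite h1 h2 h3. lia.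
Qed.

Lemma binF2 m k : 0 < m -> 'C(m + k, k) = 'C(m.-1 + k, k) + (if k is k'.+1 then 'C(m + k', k') else 0).
Proof.
case: m => // m _. case: k => [|k]; first by rewrite !bin0 addn0.
by rewrite /= addSn binS addSnnS.
Qed.
Lemma binF4 m k : 0 < m -> k * 'C(m.-1 + k, k) = m * (if k is k'.+1 then 'C(m + k', k') else 0).
Proof.
move=> mpos. case: k => [|k]; first by rewrite muln0.
rewrite mul_bin_left. have -> : m.-1 + k.+1 = m + k by lia.
congr (_ * _). lia.
Qed.

Lemma c_formula n r k : (n + r) * c r n k = r * 'C(n + r, r + k.*2) * 'C((n + r).-1 + k, k).
Proof.
elim/ltn_ind: n r k => n IHn r k.
elim: r k => [|r IHr] k.
  rewrite c0 !mul0n; case: n {IHn} => //= n; by rewrite muln0.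
case: n IHn IHr => [|n'] IHn IHr.
  rewrite c_n0 !add0n. case: k => [|k].
    by rewrite double0 !addn0 binn bin0 !muln1.
  rewrite bin_small ?muln0 //. lia.
rewrite c_rec.
have h1 := IHr k.
have h2 := IHn n' (ltnSn _) r.+1 k.
have e2 : n' + r.+1 = n'.+1 + r by rewrite addnS.
rewrite e2 addSn in h2.
rewrite -addSn in h2.
have mpos : 0 < n'.+1 + r by [].
have F1 : 'C((n'.+1 + r).+1, (r + k.*2).+1) = 'C(n'.+1 + r, r + k.*2) + 'C(n'.+1 + r, (r + k.*2).+1) by rewrite binS addnC.
have G3 : (n'.+1 + r) * 'C(n'.+1 + r, r + k.*2) = (r + k.*2) * 'C(n'.+1 + r, r + k.*2) + ((n'.+1 + r) - (r + k.*2)) * 'C(n'.+1 + r, r + k.*2).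
  case: (leqP (r + k.*2) (n'.+1 + r)) => h.
    by rewrite -mulnDl subnKC.
  by rewrite bin_small // !muln0.
rewrite addnS succnK [r.+1 + k.*2]addSn F1 binF2 //.
rewrite -muln2 in h1 h2 F1 G3 *.
apply: (@alg_c _ _ k _ _ _ _ _ _ _ ((n'.+1 + r) - (r + k*2))) => //.
- rewrite -F1. clear -IHn. destruct n' as [|n''].
    case: k => [|k]; first by rewrite !muln0.
    rewrite bin_small ?muln0 ?mul0n //. lia.
  case: k => [|k]; first by rewrite !muln0.
  have := IHn n'' (ltnW (ltnSn _)) r.+3 k.
  have -> : n'' + r.+3 = (n''.+2 + r).+1 by lia.
  have -> : r.+3 + k.*2 = (r + k.+1 * 2).+1 by lia.
  have -> : (n''.+2 + r).+1.-1 + k = n''.+2 + r + k by lia.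
  by [].
- by rewrite binF4.
- by rewrite mul_bin_left.
- by rewrite G3.
Qed.

Lemma binU E n : 'C(E.+1, n) = 'C(E, n) + (if n is n''.+1 then 'C(E, n'') else 0).
Proof. case: n => [|n]; first by rewrite !bin0. by rewrite binS. Qed.

Lemma d_formula n r : (n + r) * d r n = r * 'C((n.*2 + r).-1, n).
Proof.
elim/ltn_ind: n r => n IHn r.
elim: r => [|r IHr].
  rewrite d0 !mul0n; case: n {IHn} => //= n; by rewrite muln0.
case: n IHn IHr => [|n'] IHn IHr.
  by rewrite d_n0 muln1 bin0 muln1.
rewrite d_rec.
have h1 := IHr.
have h2 := IHn n' (ltnSn _) r.+1.
rewrite -!muln2 in h1 h2 *.
have E1 : (n'.+1 * 2 + r).-1 = (n' * 2 + r).+1 by lia.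
have E2 : (n' * 2 + r.+1).-1 = n' * 2 + r by lia.
have E3 : n' + r.+1 = n'.+1 + r by lia.
rewrite E1 in h1. rewrite E2 E3 in h2.
have -> : (n'.+1 * 2 + r.+1).-1 = (n' * 2 + r).+2 by lia.
have -> : n'.+1 + r.+1 = (n'.+1 + r).+1 by lia.
rewrite binS binS binU.
rewrite binS in h1.
apply: (@alg_d n' r _ _ _ (if n' is n''.+1 then 'C(n' * 2 + r, n'') else 0)) => //.
- clear -IHn. destruct n' as [|n'']; first by rewrite !muln0.
  have := IHn n'' (ltnW (ltnSn _)) r.+3.
  rewrite -muln2.
  have -> : n'' + r.+3 = (n''.+2 + r).+1 by lia.
  have -> : (n'' * 2 + r.+3).-1 = n''.+1 * 2 + r by lia.
  by [].
- destruct n' as [|n'']; first by rewrite !muln0 mul0n.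
  rewrite mul_bin_left. congr (_ * _). lia.
- rewrite mul_bin_left. congr (_ * _). lia.
Qed.

Lemma sum_eq_lt (x N : nat) : \sum_(k < N) (x == k) = (x < N).
Proof.
elim: N => [|N IH]; first by rewrite big_ord0.
rewrite big_ord_recr /= IH.
case: (ltngtP x N) => h.
- by rewrite ltnS ltnW.
- by rewrite ltnS leqNgt h.
- by rewrite h ltnSn.
Qed.

Lemma sum_count (A : Type) (g : A -> nat) l N :
  \sum_(k < N) count (fun x => g x == k) l = count (fun x => g x < N) l.
Proof.
elim: l => [|x l IH] /=; first by rewrite big1.
by rewrite big_split /= IH sum_eq_lt.
Qed.

Definition L n := enumF (fuelc 1 n) 1 n.
Definition T n := List.map (fun f => head leaf f) (L n).

Lemma T_mem n t : In t (T n) <-> edges t = n.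
Proof.
split.
  move=> /in_map_iff [f [<- /enumF_mem [sf ef _]]].
  case: f sf ef => [|x [|]] //= _. by rewrite /fedges /= addn0.
move=> et. apply/in_map_iff. exists [:: t]; split => //.
apply: enumF_complete => //; rewrite /fuelc //.
by rewrite /fedges /= addn0.
Qed.

Lemma T_nodup n : NoDup (T n).
Proof.
apply: NoDup_map_NoDup_ForallPairs; last exact: enumF_nodup.
move=> f g /enumF_mem [sf _ _] /enumF_mem [sg _ _].
case: f sf => [|x [|]] // _; case: g sg => [|y [|]] // _ /= -> //.
Qed.

Lemma count_T n (p : pred otree) : count p (T n) = count (fun f => p (head leaf f)) (L n).
Proof. exact: count_lmap. Qed.

Theorem mainTheorem2 (n : nat) (s : seq otree) :
  (1 <= n)%N ->
  List.NoDup s ->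
  (forall t : otree, List.In t s <-> edges t = n) ->
  (forall k : nat,
     (n.+1 * count (fun t => nodes_adj_leaf t == k) s
      = 'C(n.+1, k.*2.+1) * 'C(n + k, k))%N)
  /\ (n.+1 * catalan n = \sum_(k < n.+1) 'C(n.+1, k.*2.+1) * 'C(n + k, k))%N.
Proof.
move=> _ hnd hs.
have hcs : forall p : pred otree, count p s = count (fun f => p (head leaf f)) (L n).
  move=> p. rewrite -count_T. apply: count_nodup => //; first exact: T_nodup.
  move=> t. rewrite hs T_mem. by [].
have hck : forall k, count (fun t => nodes_adj_leaf t == k) s = c 1 n k.
  move=> k. rewrite hcs /c. apply: count_In_ext => f /enumF_mem [sf _ _].
  case: f sf => [|x [|]] // _. by rewrite /fstat /= addn0.
have part1 : forall k, n.+1 * count (fun t => nodes_adj_leaf t == k) s = 'C(n.+1, k.*2.+1) * 'C(n + k, k).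
  move=> k. rewrite hck. have := c_formula n 1 k.
  by rewrite addn1 mul1n succnK add1n.
split => //.
have hd := d_formula n 1.
rewrite addn1 mul1n addn1 succnK in hd.
rewrite /catalan -hd mulKn //.
under eq_bigr => k _ do rewrite -part1.
rewrite -big_distrr /=. congr (_ * _).
rewrite (eq_bigr (fun k : 'I_n.+1 => count (fun f => fstat f == k) (L n))); last first.
  by move=> k _; rewrite hck.
rewrite sum_count /d. apply: count_In_ext => f /enumF_mem [_ _ hf] /=. by rewrite ltnS hf.
Qed.
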